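(* Let $G$ be a graph on $n$ vertices and let $k$ be an integer with $2\leq k\leq n$. If $\psi_k(G)=n-k+1$, then $G$ is connected.
   Context: All graphs are finite, simple and nonempty. For a graph $G$ and a positive integer $k$, a $k$-path vertex cover ($k$-PVC) of $G$ is a set $S$ of vertices such that every path on $k$ vertices in $G$ contains at least one vertex of $S$ (if $G$ has no path on $k$ vertices, the empty set is a $k$-PVC). $\psi_k(G)$ denotes the minimum cardinality of a $k$-PVC of $G$. *)

(* Defs.v *)
From mathcomp Require Import all_boot.
Set Implicit Arguments. Unset Strict Implicit. Unset Printing Implicit Defensive.

Definition simple_graph (T : finType) (e : rel T) : Prop :=
  symmetric e /\ irreflexive e.

Definition is_kpath (T : finType) (e : rel T) (k : nat) (p : k.-tuple T) : bool :=
  uniq p && sorted e p.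

Definition is_kPVC (T : finType) (e : rel T) (k : nat) (S : {set T}) : bool :=
  [forall p : k.-tuple T, is_kpath e p ==> [exists v in S, v \in p]].

(* psi_k(G): minimum cardinality of a k-PVC (setT is always one for k >= 1;
   the default #|T| is only the neutral element of minn). *)
Definition psi (T : finType) (e : rel T) (k : nat) : nat :=
  \big[minn/#|T|]_(S : {set T} | is_kPVC e k S) #|S|.

Definition connected_graph (T : finType) (e : rel T) : Prop :=
  forall x y : T, connect e x y.

(* Main.v *)
Require Import Defs.
From mathcomp Require Import all_boot.

Lemma bigmin_le_seq {I : eqType} {r : seq I} {P : pred I} {F : I -> nat} {m i0} :
  i0 \in r -> P i0 -> \big[minn/m]_(i <- r | P i) F i <= F i0.
Proof.
elim: r => [//|a r IH]; rewrite inE big_cons => /orP [/eqP <- ->|Hr Pi].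
  by rewrite geq_minl.
case: (P a); last exact: IH.
by rewrite (leq_trans (geq_minr _ _)) ?IH.
Qed.

Lemma grow_set {T : finType} {A : {set T}} {m} :
  #|A| <= m <= #|T| -> exists B : {set T}, A \subset B /\ #|B| = m.
Proof.
elim: m => [|m IH].
  rewrite leqn0 => /andP [/eqP /cards0_eq -> _]; exists set0; by rewrite cards0.
move=> /andP [Am mT].
case: (ltngtP #|A| m.+1) Am => // [Alt _|Aeq _]; last by exists A.
have [B [AB Bm]] := IH (introT andP (conj Alt (ltnW mT))).
have : 0 < #|~: B| by rewrite cardsCs setCK Bm subn_gt0.
case/card_gt0P => z; rewrite inE => zB.
exists (z |: B); split; first by rewrite (subset_trans AB) // subsetUr.
by rewrite cardsU1 (negbTE zB) Bm.
Qed.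

Theorem mainTheorem9 (T : finType) (e : rel T) (k : nat) :
  simple_graph e -> 0 < #|T| -> 2 <= k <= #|T| ->
  psi e k = #|T| - k + 1 ->
  connected_graph e.
Proof.
move=> [sym irr] n0 /andP [k2 kn] Hpsi x y.
have csym := sym_connect_sym sym.
have [->|xy] := eqVneq x y; first exact: connect0.
apply/idPn => nxy.
have c2 : #|[set x; y]| <= k <= #|T| by rewrite cards2 xy k2 kn.
have [W [xyW Wk]] := grow_set c2.
have pvc : is_kPVC e k (~: W).
  apply/forallP => p; apply/implyP => /andP [up sp].
  case: existsP => // nex; exfalso.
  have pW : [set v | v \in p] \subset W.
    apply/subsetP => v; rewrite inE => vp; apply/idPn => vW.
    by apply: nex; exists v; rewrite inE vW.
  have : [set v | v \in p] == W.
    have cp : #|[set v | v \in p]| = k.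
      rewrite -{2}(size_tuple p) -(card_uniqP up); apply: eq_card => v; by rewrite inE.
    by rewrite eqEcard pW Wk cp leqnn.
  move/eqP => EW.
  have xp : x \in (p : seq T).
    by have := subsetP xyW x; rewrite -EW !inE eqxx => /(_ isT).
  have yp : y \in (p : seq T).
    by have := subsetP xyW y; rewrite -EW !inE eqxx orbT => /(_ isT).
  move: sp xp yp; case: (tval p) => [//|h t] /= pt xp yp.
  have cx := path_connect pt xp; have cy := path_connect pt yp.
  move/negP: nxy; apply; apply: connect_trans (cy).
  by rewrite csym.
have : psi e k <= #|~: W|.
  by rewrite /psi; apply: bigmin_le_seq; rewrite ?mem_index_enum.
by rewrite Hpsi cardsCs setCK Wk addn1 ltnn.
Qed.
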